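(* Let $p>2$ be a prime, $n\ge1$, $A$ a finite abelian $p$-group and $G$ a group containing $A$ as a normal subgroup with $G/A\cong\mathbb{Z}_{p^n}$, generated by the image of an element $t\in G$. If $[e]_\varphi$ is a subgroup of $G$ for every $\varphi\in{\rm Aut}\,G$, then there is a homomorphism $\theta:A\to\Omega_n(A)$ such that $t^{-1}at=a\,\theta(a)$ for all $a\in A$, and $\theta(\Omega_k(A))\le\Omega_{k-1}(A)$ for all $1\le k\le n$.
   Context: For an automorphism $\varphi$ of $G$, $[e]_\varphi=\{z^{-1}\varphi(z)\mid z\in G\}$. $\Omega_k(A)=\{a\in A\mid a^{p^k}=e\}$; in particular $\Omega_0(A)=\{e\}$. *)

(* Defs.v *)
From HB Require Import structures.
From mathcomp Require Import all_boot all_fingroup all_solvable.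
Set Implicit Arguments. Unset Strict Implicit. Unset Printing Implicit Defensive.
Local Open Scope group_scope.

Definition twisted_class (gT : finGroupType) (G : {set gT}) (phi : {perm gT})
  : {set gT} := [set z^-1 * phi z | z in G].

Definition Omega_set (gT : finGroupType) (p k : nat) (A : {set gT}) : {set gT} :=
  [set a in A | a ^+ (p ^ k) == 1].

(* Main.v *)
Require Import Defs.
From HB Require Import structures.
From mathcomp Require Import all_boot all_fingroup all_solvable.
Set Implicit Arguments. Unset Strict Implicit. Unset Printing Implicit Defensive.
Local Open Scope group_scope.

Lemma bin2_double n : (('C(n, 2)).*2 = n * n.-1)%N.
Proof.
rewrite bin2 halfK; case: n => [|n] //=.
by rewrite oddM /= andNb subn0.
Qed.

Lemma abel_comm (gT : finGroupType) (A : {group gT}) x y :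
  abelian A -> x \in A -> y \in A -> commute x y.
Proof. by move=> cAA Ax Ay; exact: (centsP cAA) x Ax y Ay. Qed.

Lemma commA_in (gT : finGroupType) (A : {group gT}) x t :
  t \in 'N(A) -> x \in A -> [~ x, t] \in A.
Proof. by move=> nAt Ax; rewrite commgEl groupM ?groupV // memJ_norm. Qed.

Lemma commMA (gT : finGroupType) (A : {group gT}) t x y :
  abelian A -> t \in 'N(A) -> x \in A -> y \in A ->
  [~ x * y, t] = [~ x, t] * [~ y, t].
Proof.
move=> cAA nAt Ax Ay; rewrite commMgJ; congr (_ * _).
have c := abel_comm cAA (commA_in nAt Ax) Ay.
by rewrite conjgE c mulKg.
Qed.

Lemma commXA (gT : finGroupType) (A : {group gT}) t x k :
  abelian A -> t \in 'N(A) -> x \in A -> [~ x ^+ k, t] = [~ x, t] ^+ k.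
Proof.
move=> cAA nAt Ax; elim: k => [|k IH]; first by rewrite !expg0 comm1g.
by rewrite !expgSr (commMA cAA) ?groupX // IH.
Qed.

Lemma no_bad (gT : finGroupType) (p n : nat) (G A : {group gT}) (t a : gT) :
  prime p -> (2 < p)%N -> (0 < n)%N ->
  abelian A -> A <| G ->
  t \in G -> (G / A)%g = <[coset A t]>%g -> #|(G / A)%g| = (p ^ n)%N ->
  (forall phi, phi \in Aut G -> group_set (twisted_class G phi)) ->
  a \in A -> a ^+ p = 1 -> [~ [~ a, t], t] = 1 -> [~ a, t] = 1.
Proof.
move=> pp p2 n0 cAA nsAG Gt defGA cardGA gsH Aa ap dt1.
have sAG := normal_sub nsAG; have nAG := normal_norm nsAG.
have nAt : t \in 'N(A) := subsetP nAG t Gt.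
set d := [~ a, t].
have dA : d \in A := commA_in nAt Aa.
have dp : d ^+ p = 1 by rewrite /d -(commXA _ cAA) // ap comm1g.
have cad : commute a d := abel_comm cAA Aa dA.
have ctd : commute t d.
  have e : [~ t, d] = 1 by rewrite -invg_comm dt1 invg1.
  by apply/commgP; rewrite e.
set m := #[coset A t].
have mE : m = (p ^ n)%N by rewrite /m -cardGA defGA.
have p1 : (1 < p)%N := prime_gt1 pp.
have m1 : (1 < m)%N.
  by rewrite mE; apply: (leq_trans p1); rewrite -{1}(expn1 p) leq_exp2l.
have pm : (p %| m)%N by rewrite mE -{1}(expn1 p) dvdn_exp2l.
pose w i := t ^- i * (t * a) ^+ i.
have wE i : w i = a ^+ i * d ^+ 'C(i, 2).
  rewrite /w expMg_Rmul; last first.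
    - by apply/commute_sym.
    - by apply/commute_sym.
  by rewrite -!mulgA mulKg.
have wA i : w i \in A by rewrite wE groupM ?groupX.
have ord_d : (#[d] %| p)%N by rewrite order_dvdn dp.
have wm : w m = 1.
  have am : a ^+ m = 1.
    by apply/eqP; rewrite -order_dvdn (dvdn_trans _ pm) // order_dvdn ap.
  have dm : d ^+ 'C(m, 2) = 1.
    apply/eqP; rewrite -order_dvdn (dvdn_trans ord_d) //.
    have : (p %| ('C(m, 2)).*2)%N by rewrite bin2_double dvdn_mulr.
    rewrite -mul2n Euclid_dvdM // => /orP [|//].
    by move/(dvdn_leq (isT : (0 < 2)%N)); rewrite leqNgt p2.
  by rewrite wE am dm mulg1.
have wD i j : w (i + j) = w i ^ (t ^+ j) * w j.
  by rewrite /w !expgD invMg conjgE !mulgA mulgK.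
have tmA : t ^+ m \in A.
  apply: coset_idr; first by rewrite groupX.
  by rewrite morphX // expg_order.
have wmod i : w (i %% m)%N = w i.
  have H q r : w (r + q * m)%N = w r.
    elim: q => [|q IH]; first by rewrite mul0n addn0.
    rewrite mulSn addnCA addnC wD IH wm mulg1.
    have c := abel_comm cAA (wA r) tmA.
    by rewrite conjgE c mulKg.
  by rewrite {2}(divn_eq i m) addnC H.
clearbody w.
pose idx (x : gT) := oapp val 0%N [pick i : 'I_m | coset A x == coset A t ^+ i].
have idxP x : x \in G -> coset A x = coset A t ^+ idx x /\ (idx x < m)%N.
  move=> Gx; rewrite /idx; case: pickP => [i /eqP -> | none] /=; first by split.
  have : coset A x \in <[coset A t]> by rewrite -defGA mem_quotient.
  case/cyclePmin=> i lti ci.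
  by have := none (Ordinal lti); rewrite /= ci eqxx.
have idxC x y : coset A x = coset A y -> idx x = idx y by rewrite /idx => ->.
have idxt : idx t = 1%N.
  have [ct lt] := idxP t Gt.
  move: ct => /eqP; rewrite -{1}(expg1 (coset A t)) eq_expg_mod_order.
  by rewrite -/m !modn_small // => /eqP.
pose f x := x * w (idx x).
have fM : {in G &, {morph f : x y / x * y}}.
  move=> x y Gx Gy; rewrite /f.
  have [cx _] := idxP x Gx; have [cy _] := idxP y Gy.
  have [cxy _] := idxP _ (groupM Gx Gy).
  have Nx : x \in 'N(A) := subsetP nAG x Gx.
  have Ny : y \in 'N(A) := subsetP nAG y Gy.
  have -> : w (idx (x * y)) = w (idx x + idx y)%N.
    rewrite -wmod -[in RHS]wmod; congr (w _); apply/eqP.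
    rewrite -eq_expg_mod_order -cxy expgD -cx -cy morphM //.
  rewrite wD.
  set j := idx y; set wi := w (idx x).
  have eA : y * t ^- j \in A.
    apply: coset_idr; first by rewrite groupM ?groupV ?groupX.
    rewrite morphM ?groupV ?groupX // morphV ?groupX // morphX //.
    by change (coset A y * (coset A t ^+ j)^-1 = 1); rewrite cy mulgV.
  have -> : wi ^ (t ^+ j) = wi ^ y.
    have ey : y = (y * t ^- j) * t ^+ j by rewrite mulgKV.
    rewrite [in RHS]ey conjgM; congr (_ ^ _).
    by rewrite /wi conjgE (abel_comm cAA (wA _) eA) mulKg.
  by rewrite !mulgA -(mulgA x wi y) [wi * y]conjgC !mulgA.
pose fm := @Morphism _ _ G f fM.
have injf : 'injm fm.
  apply/injmP=> x y Gx Gy /= E.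
  have cxy : coset A x = coset A y.
    by rewrite -(coset_kerr x (wA (idx x))) -(coset_kerr y (wA (idx y))) -/(f x) -/(f y) E.
  by move: E; rewrite /f (idxC _ _ cxy) => /mulIg.
have Gf : fm @* G = G.
  apply/eqP; rewrite eqEcard card_injm // leqnn andbT morphimEdom.
  apply/subsetP=> _ /imsetP [x Gx ->] /=.
  by rewrite /f groupM // (subsetP sAG) ?wA.
set phi := aut injf Gf.
have gs := gsH phi (Aut_aut injf Gf).
have inK z : z \in G -> w (idx z) \in twisted_class G phi.
  move=> Gz; apply/imsetP; exists z => //.
  by rewrite autE //= /f mulKg.
have aK : a \in twisted_class G phi.
  by have := inK t Gt; rewrite idxt wE expg1 /= expg0 mulg1.
have := (group_setP gs).2 a a aK aK.
case/imsetP=> z Gz; rewrite autE //= /f mulKg wE.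
set i := idx z => E.
have E2 : d ^+ 2 = d ^+ i.
  have := congr1 (fun x => [~ x, t]) E => /=.
  rewrite (commMA cAA) // (commMA cAA) ?groupX // !(commXA _ cAA) // dt1 expg1n mulg1.
  by move=> <-; rewrite expg2.
apply/eqP; apply: contraT => dne; exfalso.
have od : #[d] = p.
  case/primeP: pp => _ /(_ _ ord_d) /orP [/eqP o1|/eqP //].
  by have := order_gt1 d; rewrite dne o1.
have i2 : (i %% p = 2)%N.
  by move: E2 => /eqP; rewrite eq_expg_mod_order od => /eqP; rewrite modn_small.
have ai : a ^+ i = a ^+ 2 by rewrite -(expg_mod i ap) i2.
have dC : d ^+ 'C(i, 2) = 1.
  by move: E; rewrite ai expg2 -{1}(mulg1 (a * a)) => /mulgI.
have : (p %| ('C(i, 2)).*2)%N.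
  by rewrite -mul2n dvdn_mull // -od order_dvdn dC.
rewrite bin2_double Euclid_dvdM // => /orP [].
  by rewrite /dvdn i2.
rewrite (divn_eq i p) i2 addn2 /= -addn1 dvdn_addr ?dvdn_mull // dvdn1.
by move/eqP=> p1'; rewrite p1' in p1.
Qed.

Lemma key (gT : finGroupType) (p n : nat) (G A : {group gT}) (t : gT) :
  prime p -> (2 < p)%N -> (0 < n)%N ->
  abelian A -> p.-group A -> A <| G ->
  t \in G -> (G / A)%g = <[coset A t]>%g -> #|(G / A)%g| = (p ^ n)%N ->
  (forall phi, phi \in Aut G -> group_set (twisted_class G phi)) ->
  forall b, b \in A -> b ^+ p = 1 -> [~ b, t] = 1.
Proof.
move=> pp p2 n0 cAA pA nsAG Gt defGA cardGA gsH.
have sAG := normal_sub nsAG; have nAG := normal_norm nsAG.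
have nAt : t \in 'N(A) := subsetP nAG t Gt.
have bad := no_bad pp p2 n0 cAA nsAG Gt defGA cardGA gsH.
pose c x := [~ x, t].
have ind r : forall y, y \in A -> y ^+ p = 1 -> iter r c y = 1 -> c y = 1.
  elim: r => [|r IH] y Ay yp; first by move=> /= ->; rewrite /c comm1g.
  rewrite iterSr => /IH.
  have cyA : c y \in A := commA_in nAt Ay.
  move=> H; apply: bad => //; apply: H => //.
  by rewrite /c -(commXA _ cAA) // yp comm1g.
have pG : p.-group G.
  rewrite /pgroup -(Lagrange sAG) -card_quotient // cardGA pnatM.
  by apply/andP; split; [exact: pA | rewrite pnatX pnat_id].
have nilG := pgroup_nil pG.
have iterL r y : y \in G -> iter r c y \in 'L_r.+1(G).
  elim: r => [|r IH] Gy /=; first by rewrite lcn1.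
  by rewrite lcnSn mem_commg ?IH.
move=> b Ab bp; apply: (ind (nil_class G)) => //.
have := iterL (nil_class G) b (subsetP sAG b Ab).
by rewrite (lcn_nil_classP _ nilG (leqnn _)) inE => /eqP.
Qed.

Lemma main_aux (gT : finGroupType) (p n : nat) (G A : {group gT}) (t : gT) :
  prime p -> (2 < p)%N -> (0 < n)%N ->
  (abelian A)%g -> (p.-group A)%g -> (A <| G)%g ->
  t \in G -> (G / A)%g = <[coset A t]>%g -> #|(G / A)%g| = (p ^ n)%N ->
  (forall phi, phi \in Aut G -> group_set (twisted_class G phi)) ->
  exists theta : {morphism A >-> gT},
    [/\ forall a, a \in A -> theta a \in Omega_set p n A,
        forall a, a \in A -> (a ^ t)%g = (a * theta a)%g
      & forall k, (1 <= k <= n)%N ->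
          (theta @* (Omega_set p k A))%g \subset Omega_set p k.-1 A].
Proof.
move=> pp p2 n0 cAA pA nsAG Gt defGA cardGA gsH.
have K := key pp p2 n0 cAA pA nsAG Gt defGA cardGA gsH.
have sAG := normal_sub nsAG; have nAG := normal_norm nsAG.
have nAt : t \in 'N(A) := subsetP nAG t Gt.
have thM : {in A &, {morph (fun x => [~ x, t]) : x y / (x * y)%g}}.
  by move=> x y Ax Ay; exact: (commMA cAA).
exists (@Morphism _ _ A _ thM); split => /=.
- move=> a Aa; rewrite inE commA_in //=.
  set m := #[coset A t].
  have mE : m = (p ^ n)%N by rewrite /m -cardGA defGA.
  have Ga := subsetP sAG a Aa.
  set phi := conj_aut G a.
  have Aphi : phi \in Aut G.
    apply: (subsetP (Aut_conj_aut G G)); apply: mem_morphim => //.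
    exact: (subsetP (normG G)).
  have gs := gsH phi Aphi.
  set g := [~ t, a].
  have gK : g \in twisted_class G phi.
    by apply/imsetP; exists t => //; rewrite conj_autE // commgEl.
  have sK : twisted_class G phi \subset [set [~ t ^+ (val i), a] | i : 'I_m].
    apply/subsetP=> _ /imsetP [z Gz ->]; rewrite conj_autE // -commgEl.
    have : coset A z \in <[coset A t]> by rewrite -defGA mem_quotient.
    case/cyclePmin=> i lti ci.
    have eA : (z * t ^- i)%g \in A.
      apply: coset_idr; first by rewrite groupM ?groupV ?groupX // (subsetP nAG).
      rewrite morphM ?groupV ?groupX // ?(subsetP nAG) // morphV ?groupX // morphX //.
      by change (coset A z * (coset A t ^+ i)^-1 = 1)%g; rewrite ci mulgV.
    apply/imsetP; exists (Ordinal lti) => //=.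
    rewrite -{1}(mulgKV (t ^+ i) z) commMgJ.
    have : commute (z * t ^- i)%g a := abel_comm cAA eA Aa.
    by move/commgP/eqP->; rewrite conj1g mul1g.
  have leg : (#[g] <= m)%N.
    apply: leq_trans (subset_leq_card (subset_trans _ sK)) _.
      by rewrite -[twisted_class G phi]/(gval (Group gs)) cycle_subG.
    by apply: leq_trans (leq_imset_card _ _) _; rewrite card_ord.
  have gA : g \in A by rewrite /g -invg_comm groupV commA_in.
  have [k ok] := p_natP (mem_p_elt pA gA).
  have dvd : (#[g] %| p ^ n)%N.
    rewrite ok dvdn_exp2l // -(leq_exp2l _ _ (prime_gt1 pp)) -ok -mE //.
  by rewrite -invg_comm expgVn; move: dvd; rewrite order_dvdn => /eqP ->; rewrite invg1.
- by move=> a Aa; rewrite conjg_mulR.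
move=> k /andP [k1 kn]; apply/subsetP=> _ /morphimP [x Ax Ox ->] /=.
move: Ox; rewrite !inE => /andP [_ xk].
rewrite commA_in //= -(commXA _ cAA) //; apply/eqP; apply: K; first exact: groupX.
by rewrite -expgM -expnSr prednK // (eqP xk).
Qed.

Local Close Scope group_scope.
Unset Implicit Arguments.

Theorem mainTheorem12 (gT : finGroupType) (p n : nat) (G A : {group gT}) (t : gT) :
  prime p -> (2 < p)%N -> (0 < n)%N ->
  (abelian A)%g -> (p.-group A)%g -> (A <| G)%g ->
  t \in G -> (G / A)%g = <[coset A t]>%g -> #|(G / A)%g| = (p ^ n)%N ->
  (forall phi, phi \in Aut G -> group_set (twisted_class G phi)) ->
  exists theta : {morphism A >-> gT},
    [/\ forall a, a \in A -> theta a \in Omega_set p n A,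
        forall a, a \in A -> (a ^ t)%g = (a * theta a)%g
      & forall k, (1 <= k <= n)%N ->
          (theta @* (Omega_set p k A))%g \subset Omega_set p k.-1 A].
Proof. exact: main_aux. Qed.
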